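(* $\limsup_{t\to\infty} r_t \leq 2\sqrt{6}-4$.
   Context: Let $t$ be a positive integer (the number of topics). A voter matrix with $t$ topics is a matrix $V\in\{Y,N\}^{n\times t}$ for some positive integer $n$ (rows are voters), subject to the standing assumption that in every column the number of entries $Y$ is at least the number of entries $N$. $\mathcal{V}_t$ is the set of all voter matrices with $t$ topics and any number of voters. A proposal is a vector $p\in\{Y,N\}^t$. A voter $v$ supports $p$ if the Hamming distance between $v$ and $p$ is at most $t/2$; $p$ is supported by $V$ if at least $n/2$ rows of $V$ support $p$. For $i=1,\dots,t$ let $m_i$ be the fraction of entries $Y$ in column $i$ of $V$, and $m_V=\frac1t\sum_i m_i$. For a proposal $p$ let $m_i'=m_i$ if $p_i=Y$ and $m_i'=1-m_i$ if $p_i=N$; set $R_p=\frac1t\sum_i m_i'$ and $r_p=R_p/m_V$. Let $r_V=\max r_p$, the maximum over all proposals $p$ supported by $V$, and $r_t=\inf_{V\in\mathcal{V}_t} r_V$. *)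

(* Defs.v *)
From mathcomp Require Import all_boot all_order all_algebra.
From mathcomp Require Import all_classical all_reals all_analysis.
Set Implicit Arguments. Unset Strict Implicit. Unset Printing Implicit Defensive.
Import Order.TTheory GRing.Theory Num.Theory.
Local Open Scope ring_scope.
Local Open Scope classical_set_scope.

(* Entries: true = Y, false = N.  Rows are voters, columns are topics. *)
Section Voting.
Variable R : realType.

Definition colY n t (V : 'M[bool]_(n, t)) (j : 'I_t) : nat := #|[set i | V i j]|.

Definition voter_matrix n t (V : 'M[bool]_(n, t)) : Prop :=
  (0 < n)%N /\ forall j : 'I_t, (#|[set i | ~~ V i j]| <= colY V j)%N.

Definition proposal t := {ffun 'I_t -> bool}.

Definition hamming n t (V : 'M[bool]_(n, t)) (i : 'I_n) (p : proposal t) : nat :=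
  #|[set j | V i j != p j]|.

Definition supports n t (V : 'M[bool]_(n, t)) (i : 'I_n) (p : proposal t) : bool :=
  ((hamming V i p)%:R <= (t%:R / 2 : R)).

Definition supported n t (V : 'M[bool]_(n, t)) (p : proposal t) : bool :=
  ((#|[set i | supports V i p]|)%:R >= (n%:R / 2 : R)).

Definition m_col n t (V : 'M[bool]_(n, t)) (j : 'I_t) : R := (colY V j)%:R / n%:R.

Definition m_V n t (V : 'M[bool]_(n, t)) : R := t%:R^-1 * \sum_(j < t) m_col V j.

Definition m_col' n t (V : 'M[bool]_(n, t)) (p : proposal t) (j : 'I_t) : R :=
  if p j then m_col V j else 1 - m_col V j.

Definition R_p n t (V : 'M[bool]_(n, t)) (p : proposal t) : R :=
  t%:R^-1 * \sum_(j < t) m_col' V p j.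

Definition r_p n t (V : 'M[bool]_(n, t)) (p : proposal t) : R := R_p V p / m_V V.

(* maximum of r_p over supported proposals (a supported proposal always exists,
   and r_p >= 0, so 0 as neutral element is harmless) *)
Definition r_V n t (V : 'M[bool]_(n, t)) : R :=
  \big[Num.max/0]_(p : proposal t | supported V p) r_p V p.

Definition r_t (t : nat) : R :=
  inf [set x : R | exists n (V : 'M[bool]_(n, t)), voter_matrix V /\ x = r_V V].

End Voting.

(* Main.v *)
Require Import Defs.
From mathcomp Require Import all_boot all_order all_algebra.
From mathcomp Require Import all_classical all_reals all_analysis.
From mathcomp Require Import ring lra.
Set Implicit Arguments. Unset Strict Implicit. Unset Printing Implicit Defensive.
Import Order.TTheory GRing.Theory Num.Theory.
Local Open Scope ring_scope.

Section Ffun.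
Variable R : realType.
Variable u : nat.
Local Notation F := {ffun 'I_u.+1 -> 'I_3}.

Lemma distrA (G : 'I_u.+1 -> 'I_3 -> R) :
  \sum_(f : F) \prod_i G i (f i) = \prod_i \sum_a G i a.
Proof. by rewrite bigA_distr_bigA. Qed.

Lemma prod_pick (X : 'I_u.+1 -> R) (j : 'I_u.+1) :
  \prod_i (if i == j then X i else 1) = X j.
Proof. by rewrite -big_mkcond big_pred1_eq. Qed.

Lemma sum_ffun1 (g : 'I_3 -> R) (j : 'I_u.+1) :
  \sum_(f : F) g (f j) = (\sum_a g a) * 3%:R ^+ u.
Proof.
transitivity (\sum_(f : F) \prod_i (fun i a => if i == j then g a else 1) i (f i)).
  by apply: eq_bigr => f _; rewrite /= prod_pick.
rewrite (distrA (fun i a => if i == j then g a else 1)) (bigD1 j) //= eqxx; congr (_ * _).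
rewrite (eq_bigr (fun _ => 3%:R)); last first.
  move=> i /negbTE ->; by rewrite sumr_const card_ord.
by rewrite prodr_const cardC1 card_ord.
Qed.

Lemma sum_ffun2 (g h : 'I_3 -> R) (j k : 'I_u.+1) : j != k ->
  \sum_a g a = 0 -> \sum_(f : F) g (f j) * h (f k) = 0.
Proof.
move=> jk g0.
transitivity (\sum_(f : F) \prod_i (fun i a => (if i == j then g a else 1) * (if i == k then h a else 1)) i (f i)).
  by apply: eq_bigr => f _; rewrite /= big_split /= !prod_pick.
rewrite (distrA (fun i a => (if i == j then g a else 1) * (if i == k then h a else 1))) (bigD1 j) //= eqxx (negbTE jk).
rewrite (eq_bigr g) ?g0 ?mul0r // => a _; by rewrite mulr1.
Qed.

End Ffun.
Section Mx.
Variable R : realType.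
Variable u : nat.
Local Notation F := {ffun 'I_u.+1 -> 'I_3}.
Definition NA := #|{ffun 'I_u.+1 -> 'I_3}|.
Definition bB := (2 * 3 ^ u)%N.
Definition nV := (bB + NA)%N.
Definition VM : 'M[bool]_(nV, u.+1) :=
  \matrix_(i, j) match fintype.split i with inl _ => true | inr k => (enum_val k : F) j == ord0 end.

Lemma NAE : NA = (3 * 3 ^ u)%N.
Proof. by rewrite /NA card_ffun !card_ord expnS. Qed.

Lemma VM_l i j : VM (lshift NA i) j = true.
Proof. by rewrite mxE -[lshift _ _]/(unsplit (inl i)) unsplitK. Qed.
Lemma VM_r k j : VM (rshift bB k) j = ((enum_val k : F) j == ord0).
Proof. by rewrite mxE -[rshift _ _]/(unsplit (inr k)) unsplitK. Qed.

Lemma sum_rows (G : 'I_nV -> R) :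
  \sum_i G i = \sum_(i < bB) G (lshift NA i) + \sum_(f : F) G (rshift bB (enum_rank f)).
Proof.
rewrite big_split_ord /=; congr (_ + _).
rewrite (big_enum_val (A := predT) (fun f => G (rshift bB (enum_rank f)))) /=.
apply: eq_bigr => k _; by rewrite enum_valK.
Qed.

Lemma VM_rr f j : VM (rshift bB (enum_rank f)) j = (f j == ord0).
Proof. by rewrite VM_r enum_rankK. Qed.

End Mx.

Section Main.
Variable R : realType.
Variable u : nat.
Local Notation F := {ffun 'I_u.+1 -> 'I_3}.
Local Notation V := (VM u).

Lemma card_sumR (T : finType) (P : pred T) :
  (#|[set x | P x]%classic|%:R : R) = \sum_x (P x)%:R.
Proof.
rewrite -sum1_card natr_sum big_mkcond /=; apply: eq_bigr => x _.
have -> : (x \in [set x | P x]%classic) = P x.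
  by apply/idP/idP; rewrite in_setE.
by case: (P x).
Qed.

Lemma sum3_0 : \sum_(a < 3) ((a == ord0)%:R : R) = 1.
Proof. by rewrite !big_ord_recl big_ord0 /= !addr0. Qed.

Lemma colY_VM j : colY V j = (3 * 3 ^ u)%N.
Proof.
apply/eqP; rewrite -(eqr_nat R) /colY. rewrite (card_sumR (fun i => V i j)) sum_rows.
rewrite (eq_bigr (fun _ => 1)); last by move=> i _; rewrite VM_l.
rewrite (eq_bigr (fun f : F => ((f j == ord0)%:R : R))); last by move=> f _; rewrite VM_rr.
rewrite (sum_ffun1 (fun a => ((a == ord0)%:R : R))) sum3_0 sumr_const card_ord.
by rewrite /bB mul1r !natrM natrX; apply/eqP; ring.
Qed.


Lemma sum3_1 : \sum_(a < 3) ((a != ord0)%:R : R) = 2.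
Proof. by rewrite !big_ord_recl big_ord0 /= !addr0 add0r. Qed.

Lemma colN_VM j : #|[set i | ~~ V i j]%classic| = (2 * 3 ^ u)%N.
Proof.
apply/eqP; rewrite -(eqr_nat R) (card_sumR (fun i => ~~ V i j)) sum_rows.
rewrite (eq_bigr (fun _ => 0)); last by move=> i _; rewrite VM_l.
rewrite (eq_bigr (fun f : F => ((f j != ord0)%:R : R))); last by move=> f _; rewrite VM_rr.
rewrite (sum_ffun1 (fun a => ((a != ord0)%:R : R))) sum3_1 big1 // add0r.
by rewrite !natrM natrX.
Qed.

Lemma nVE : nV u = (5 * 3 ^ u)%N.
Proof. by rewrite /nV NAE /bB -mulnDl. Qed.

Lemma vm_VM : voter_matrix V.
Proof.
split; first by rewrite nVE muln_gt0 expn_gt0.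
by move=> j; rewrite colN_VM colY_VM leq_mul2r leqnSn orbT.
Qed.

Lemma mcol_VM j : m_col R V j = 3 / 5.
Proof.
rewrite /m_col colY_VM nVE !natrM natrX.
have h : (3 ^+ u : R) != 0 by rewrite expf_neq0.
by field.
Qed.


Definition Qr (p : proposal u.+1) : R := \sum_j ((p j)%:R : R).

Lemma sum_if (p : proposal u.+1) (a c : R) :
  \sum_j (if p j then a else c) = u.+1%:R * c + (a - c) * Qr p.
Proof.
transitivity (\sum_j (c + (a - c) * (p j)%:R)).
  by apply: eq_bigr => j _; case: (p j) => /=; ring.
by rewrite big_split /= sumr_const card_ord /Qr mulr_sumr mulr_natl.
Qed.

Lemma mV_VM : m_V R V = 3 / 5.
Proof.
rewrite /m_V (eq_bigr (fun _ => 3 / 5)); last by move=> j _; rewrite mcol_VM.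
rewrite sumr_const card_ord -mulr_natr.
have h : (u.+1%:R : R) != 0 by rewrite pnatr_eq0.
by field.
Qed.

Lemma rp_VM p : r_p R V p = (2 * u.+1%:R + Qr p) / (3 * u.+1%:R).
Proof.
rewrite /r_p mV_VM /R_p.
rewrite (eq_bigr (fun j => if p j then 3 / 5 else 2 / 5)); last first.
  by move=> j _; rewrite /m_col' mcol_VM; case: (p j) => //; field.
rewrite sum_if.
have h : (u.+1%:R : R) != 0 by rewrite pnatr_eq0.
by field.
Qed.

Lemma rp_le p : 3 * Qr p <= 2 * u.+1%:R -> r_p R V p <= 8 / 9.
Proof.
move=> h; rewrite rp_VM ler_pdivrMr; last by rewrite mulr_gt0 // ltr0n.
lra.
Qed.


Definition gg (p : proposal u.+1) (j : 'I_u.+1) (a : 'I_3) : R :=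
  ((a == ord0) == p j)%:R - (if p j then 1 / 3 else 2 / 3).

Lemma sum_gg p j : \sum_a gg p j a = 0.
Proof.
rewrite !big_ord_recl big_ord0 /gg /=; case: (p j) => /=; lra.
Qed.

Lemma gg_sq p j a : gg p j a ^+ 2 <= 1.
Proof.
rewrite /gg expr2; case: ((a == ord0) == p j); case: (p j) => /=; lra.
Qed.

Definition DD p (f : F) : R := \sum_j gg p j (f j).

Lemma sumD2 p : \sum_(f : F) DD p f ^+ 2 <= u.+1%:R * (NA u)%:R.
Proof.
have -> : \sum_(f : F) DD p f ^+ 2 = \sum_j \sum_(f : F) gg p j (f j) ^+ 2.
  transitivity (\sum_(f : F) \sum_j \sum_k gg p j (f j) * gg p k (f k)).
    apply: eq_bigr => f _; rewrite /DD expr2 mulr_suml; apply: eq_bigr => j _.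
    by rewrite mulr_sumr.
  rewrite exchange_big; apply: eq_bigr => j _ /=; rewrite exchange_big /=.
  rewrite (bigD1 j) //= [X in _ + X]big1 ?addr0.
    by apply: eq_bigr => f _; rewrite expr2.
  by move=> k kj; apply: sum_ffun2 => //; [rewrite eq_sym | exact: sum_gg].
apply: (@le_trans _ _ (\sum_(j < u.+1) \sum_(f : F) (1 : R))).
  by apply: ler_sum => j _; apply: ler_sum => f _; exact: gg_sq.
by rewrite !sumr_const card_ord mulr_natl /NA.
Qed.


Lemma ham_VM p (f : F) :
  ((hamming V (rshift (bB u) (enum_rank f)) p)%:R : R) =
  \sum_j ((f j == ord0) != p j)%:R.
Proof.
rewrite /hamming (card_sumR (fun j => V (rshift (bB u) (enum_rank f)) j != p j)).
by apply: eq_bigr => j _; rewrite VM_rr.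
Qed.

Lemma DD_eq p (f : F) :
  DD p f = u.+1%:R - \sum_j ((f j == ord0) != p j)%:R
           - (u.+1%:R * (2 / 3) + (1 / 3 - 2 / 3) * Qr p).
Proof.
rewrite /DD /gg sumrB sum_if; congr (_ - _).
transitivity (\sum_(j < u.+1) (1 - ((f j == ord0) != p j)%:R : R)).
  by apply: eq_bigr => j _; case: (_ == _); case: (p j) => /=; rewrite ?subr0 ?subrr.
by rewrite sumrB sumr_const card_ord.
Qed.

Lemma DD_ge p (f : F) : supports R V (rshift (bB u) (enum_rank f)) p ->
  2 * u.+1%:R < 3 * Qr p -> u.+1%:R / 18 <= DD p f.
Proof.
rewrite /supports ham_VM DD_eq => h1 h2; lra.
Qed.


Definition SA p : R := \sum_(f : F) (supports R V (rshift (bB u) (enum_rank f)) p)%:R.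

Lemma SA_bound p : 2 * u.+1%:R < 3 * Qr p ->
  SA p * (u.+1%:R / 18) ^+ 2 <= u.+1%:R * (NA u)%:R.
Proof.
move=> hq; apply: le_trans (sumD2 p); rewrite /SA mulr_suml.
apply: ler_sum => f _.
case: (boolP (supports R V (rshift (bB u) (enum_rank f)) p)) => h /=.
  have := DD_ge h hq; rewrite mul1r !expr2 => hd.
  have t0 : (0 : R) <= u.+1%:R / 18 by apply: divr_ge0; rewrite ler0n.
  by apply: ler_pM.
by rewrite mul0r sqr_ge0.
Qed.

Lemma supp_count p :
  (#|[set i | supports R V i p]%classic|%:R : R) <= (bB u)%:R + SA p.
Proof.
rewrite (card_sumR (fun i => supports R V i p)) sum_rows lerD2r.
apply: (@le_trans _ _ (\sum_(i < bB u) (1 : R))).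
  by apply: ler_sum => i _; case: (supports _ _ _ _) => //=; rewrite ler01.
by rewrite sumr_const card_ord.
Qed.

Lemma supp_Q p : supported R V p -> (2000 <= u.+1)%N -> 3 * Qr p <= 2 * u.+1%:R.
Proof.
move=> hs ht; rewrite leNgt; apply/negP => hq.
have h1 := supp_count p; have h2 := SA_bound hq.
have hn : ((nV u)%:R : R) = (5 * 3 ^ u)%:R by rewrite nVE.
move: hs; rewrite /supported hn => hs.
have ht' : (2000 : R) <= u.+1%:R by rewrite (ler_nat R 2000).
move: h1 h2 hs; rewrite NAE /bB !natrM natrX.
set S := SA p; set C := (#|_|%:R); set t := (u.+1%:R : R).
have x0 : (0 : R) < 3 ^+ u by rewrite exprn_gt0.
set x := (3 ^+ u : R) in x0 *.
move=> h1 h2 hs.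
have hS : x / 2 <= S by lra.
have h3 : x / 2 * (t / 18) ^+ 2 <= S * (t / 18) ^+ 2 by apply: ler_wpM2r => //; rewrite sqr_ge0.
have h4 : x / 2 * (t / 18) ^+ 2 <= t * (3 * x) by apply: le_trans h2.
rewrite expr2 in h4.
have h5 : 0 < t * x by rewrite mulr_gt0 //; lra.
nra.
Qed.


Lemma rV_VM : (2000 <= u.+1)%N -> r_V R V <= 8 / 9.
Proof.
move=> ht; rewrite /r_V; apply: bigmax_le; first lra.
move=> p hp; apply: rp_le; exact: supp_Q.
Qed.

End Main.

Lemma rV_ge0 (R : realType) n t (W : 'M[bool]_(n, t)) : 0 <= r_V R W.
Proof. exact: bigmax_ge_id. Qed.

Lemma rt_le (R : realType) t : (2000 <= t)%N -> r_t R t <= 8 / 9.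
Proof.
case: t => [//|u] ht.
apply: le_trans (rV_VM R ht); rewrite /r_t.
apply: ge_inf.
  by exists 0 => x [n [W [_ ->]]]; exact: rV_ge0.
by exists (nV u), (VM u); split => //; exact: vm_VM.
Qed.

Lemma c_ge (R : realType) : 8 / 9 <= (2 * Num.sqrt 6 - 4 : R).
Proof.
have h := @sqr_sqrtr R 6 ltac:(lra).
have h0 := @sqrtr_ge0 R 6.
rewrite expr2 in h; nra.
Qed.

Theorem theorem5p6 (R : realType) :
  (limn_esup (fun t : nat => ((r_t R t)%:E)) <= (2 * Num.sqrt 6 - 4 : R)%:E)%E.
Proof.
rewrite limn_esup_lim; apply: lime_le; first exact: is_cvg_esups.
exists 2000%N => // m /= hm.
apply: ge_ereal_sup => _ [k /= hk <-].
rewrite lee_fin; apply: le_trans (c_ge R).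
apply: rt_le; exact: leq_trans hm hk.
Qed.
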